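(* For all $\phi\in C(\mathbb{Z}_p,\mathbb{C}_p)$ and all $y\in\mathbb{Z}_p$, $S^y(\phi)=(\mathbf 1-\mathbf x)^{\star y}\star\phi$.
   Context: Fix a prime $p$. $\mathbb{C}_p$ denotes the completion of an algebraic closure of $\mathbb{Q}_p$, with absolute value $|\cdot|$ normalized by $|p|=1/p$. $C(\mathbb{Z}_p,\mathbb{C}_p)$ is the $\mathbb{C}_p$-Banach space of continuous functions $\mathbb{Z}_p\to\mathbb{C}_p$ with the sup-norm $\|\cdot\|$. For $n\in\mathbb{Z}_{\ge0}$ and $x\in\mathbb{Z}_p$, $\binom{x}{n}=x(x-1)\cdots(x-n+1)/n!$. For $\phi\in C(\mathbb{Z}_p,\mathbb{C}_p)$ let $(\nabla\phi)(x)=\phi(x+1)-\phi(x)$; every such $\phi$ has the Mahler expansion $\phi(x)=\sum_{n\ge0}(\nabla^n\phi)(0)\binom{x}{n}$. The convolution $\phi\star\psi$ of $\phi,\psi\in C(\mathbb{Z}_p,\mathbb{C}_p)$ is the continuous function with Mahler coefficients $(\nabla^n(\phi\star\psi))(0)=\sum_{k=0}^n\binom nk(\nabla^k\phi)(0)(\nabla^{n-k}\psi)(0)$. For $y\in\mathbb{Z}_p$ define $S^y(\phi)(x)=\sum_{k\ge0}(-1)^k k!\binom yk\binom xk\phi(x-k)$. Write $\mathbf 1$ for the constant function $1$ and $\mathbf x$ for $x\mapsto x$, and set $(\mathbf 1-\mathbf x)^{\star y}:=S^y(\mathbf 1)$ for $y\in\mathbb{Z}_p$. *)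

(* Defs.v *)
From HB Require Import structures.
From mathcomp Require Import all_boot all_order all_algebra.
From mathcomp Require Import reals.
From Stdlib Require Import ClassicalEpsilon.
Set Implicit Arguments. Unset Strict Implicit. Unset Printing Implicit Defensive.
Import Order.TTheory GRing.Theory Num.Theory.
Local Open Scope ring_scope.

(* The field C_p is modelled abstractly: a type K together with a real-valued
   absolute value abs : K -> R satisfying the properties that characterize
   C_p up to isometric isomorphism. *)

Section Defs.
Variables (R : realType) (K : closedFieldType) (abs : K -> R).

Definition cvgK (u : nat -> K) (l : K) : Prop :=
  forall eps : R, 0 < eps -> exists N : nat, forall n, (N <= n)%N -> abs (u n - l) < eps.

Definition cauchyK (u : nat -> K) : Prop :=
  forall eps : R, 0 < eps -> exists N : nat, forall m n, (N <= m)%N -> (N <= n)%N ->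
    abs (u m - u n) < eps.

(* the limit of a sequence (an arbitrary value if it does not converge) *)
Definition limK (u : nat -> K) : K := epsilon (inhabits 0) (fun l => cvgK u l).

Definition seriesK (a : nat -> K) : K := limK (fun n => \sum_(k < n) a k).

Record is_Cp (p : nat) : Prop := {
  Cp_prime : prime p;
  Cp_char0 : [pchar K] =i pred0;
  Cp_abs_ge0 : forall x, 0 <= abs x;
  Cp_abs_eq0 : forall x, abs x = 0 <-> x = 0;
  Cp_absM : forall x y, abs (x * y) = abs x * abs y;
  Cp_abs_ultra : forall x y, abs (x + y) <= Num.max (abs x) (abs y);
  Cp_abs_p : abs (p%:R) = (p%:R)^-1;
  Cp_complete : forall u, cauchyK u -> exists l, cvgK u l;
  Cp_alg_dense : forall x (eps : R), 0 < eps ->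
     exists (q : {poly rat}) (a : K), q != 0 /\ root (map_poly ratr q) a /\ abs (x - a) < eps
}.

Definition isZp (x : K) : Prop :=
  forall eps : R, 0 < eps -> exists n : int, abs (x - n%:~R) < eps.

Definition contZp (phi : K -> K) : Prop :=
  forall x, isZp x -> forall eps : R, 0 < eps -> exists2 delta : R, 0 < delta &
    forall z, isZp z -> abs (z - x) < delta -> abs (phi z - phi x) < eps.

Definition binomK (x : K) (n : nat) : K :=
  (\prod_(i < n) (x - i%:R)) / (n`!)%:R.

Definition nablaK (phi : K -> K) : K -> K := fun x => phi (x + 1) - phi x.

Definition mahler (phi : K -> K) (n : nat) : K := iter n nablaK phi 0.

Definition mahler_fun (c : nat -> K) : K -> K :=
  fun x => seriesK (fun n => c n * binomK x n).

Definition conv_coef (phi psi : K -> K) (n : nat) : K :=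
  \sum_(k < n.+1) ('C(n, k))%:R * mahler phi k * mahler psi (n - k).

Definition convK (phi psi : K -> K) : K -> K := mahler_fun (conv_coef phi psi).

Definition Sop (y : K) (phi : K -> K) : K -> K := fun x =>
  seriesK (fun k => (-1) ^+ k * (k`!)%:R * binomK y k * binomK x k * phi (x - k%:R)).

Definition one_minus_x_pow (y : K) : K -> K := Sop y (fun _ => 1).

End Defs.

(* Main.v *)
Require Import Defs.
From mathcomp Require Import all_boot all_order all_algebra.
From mathcomp Require Import reals.
From mathcomp Require Import ring lra zify.
From HB Require Import structures.
From Stdlib Require Import Classical ClassicalEpsilon FunctionalExtensionality.
Set Implicit Arguments. Unset Strict Implicit. Unset Printing Implicit Defensive.
Import Order.TTheory GRing.Theory Num.Theory.
Local Open Scope ring_scope.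
Section P.
Variables (R : realType) (K : closedFieldType) (abs : K -> R) (p : nat).
Hypothesis HCp : is_Cp abs p.

Lemma ab_ge0 x : 0 <= abs x. Proof. exact (Cp_abs_ge0 HCp x). Qed.
Lemma ab_eq0 x : abs x = 0 <-> x = 0. Proof. exact (Cp_abs_eq0 HCp x). Qed.
Lemma abM x y : abs (x * y) = abs x * abs y. Proof. exact (Cp_absM HCp x y). Qed.
Lemma ab_ultra x y : abs (x + y) <= Num.max (abs x) (abs y).
Proof. exact (Cp_abs_ultra HCp x y). Qed.
Lemma ab0 : abs 0 = 0. Proof. by apply/ab_eq0. Qed.

Lemma ab1 : abs 1 = 1.
Proof.
have h := abM 1 1; rewrite mulr1 in h.
have hn : abs 1 != 0 by apply/eqP => /ab_eq0 /eqP; rewrite oner_eq0.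
apply: (mulfI hn); rewrite mulr1 -{1}h //.
Qed.

Lemma abN1 : abs (-1) = 1.
Proof.
have h := abM (-1) (-1); rewrite mulrNN mulr1 ab1 in h.
have h0 := ab_ge0 (-1).
have : (abs (-1) - 1) * (abs (-1) + 1) = 0.
  by rewrite mulrDr !mulrBl -h; ring.
move/eqP; rewrite mulf_eq0 => /orP [/eqP|/eqP] e.
  by apply/eqP; rewrite -subr_eq0 e.
have : 0 < abs (-1) + 1 by apply: ltr_wpDl.
by rewrite e ltxx.
Qed.

Lemma abN x : abs (- x) = abs x.
Proof. by rewrite -mulN1r abM abN1 mul1r. Qed.

Lemma abB x y : abs (x - y) = abs (y - x).
Proof. by rewrite -abN opprB. Qed.

Lemma abX x n : abs (x ^+ n) = abs x ^+ n.
Proof. by elim: n => [|n IH]; rewrite ?expr0 ?ab1 // !exprS abM IH. Qed.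

Lemma abD_le x y e : abs x <= e -> abs y <= e -> abs (x + y) <= e.
Proof.
move=> hx hy; apply: le_trans (ab_ultra x y) _.
by rewrite ge_max hx hy.
Qed.

Lemma abD_lt x y e : abs x < e -> abs y < e -> abs (x + y) < e.
Proof.
move=> hx hy; apply: le_lt_trans (ab_ultra x y) _.
by rewrite gt_max hx hy.
Qed.

Lemma abB_le x y e : abs x <= e -> abs y <= e -> abs (x - y) <= e.
Proof. by move=> hx hy; apply: abD_le => //; rewrite abN. Qed.

Lemma abB_lt x y e : abs x < e -> abs y < e -> abs (x - y) < e.
Proof. by move=> hx hy; apply: abD_lt => //; rewrite abN. Qed.

Lemma ab_tri_le x y z e : abs (x - y) <= e -> abs (y - z) <= e -> abs (x - z) <= e.
Proof.
move=> h1 h2; have -> : x - z = (x - y) + (y - z) by ring.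
exact: abD_le.
Qed.

Lemma ab_tri_lt x y z e : abs (x - y) < e -> abs (y - z) < e -> abs (x - z) < e.
Proof.
move=> h1 h2; have -> : x - z = (x - y) + (y - z) by ring.
exact: abD_lt.
Qed.

Lemma ab_sum_le (I : Type) (r : seq I) (P : pred I) (F : I -> K) e :
  0 <= e -> (forall i, P i -> abs (F i) <= e) ->
  abs (\sum_(i <- r | P i) F i) <= e.
Proof.
move=> e0 h; apply: (big_ind (fun x => abs x <= e)).
- by rewrite ab0.
- by move=> x y hx hy; apply: abD_le.
- exact: h.
Qed.

Lemma ab_natr n : abs (n%:R) <= 1.
Proof.
elim: n => [|n IH]; first by rewrite ab0.
by rewrite mulrS; apply: abD_le =>//; rewrite ab1.
Qed.

Lemma ab_intr (z : int) : abs (z%:~R) <= 1.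
Proof.
case: z => n; first by rewrite -pmulrn ab_natr.
by rewrite NegzE mulrNz abN -pmulrn ab_natr.
Qed.

Lemma ab_small_eq0 x : (forall e : R, 0 < e -> abs x <= e) -> x = 0.
Proof.
move=> h; apply/ab_eq0; have h0 := ab_ge0 x.
case: (ltP 0 (abs x)) => hp; last by apply: le_anti; rewrite hp h0.
have := h _ (divr_gt0 hp (ltr0n R 2)).
rewrite ler_pdivlMr ?ltr0n // => h2.
have : abs x * 1 < abs x * 2 by rewrite ltr_pM2l // ltr1n.
by rewrite mulr1 ltNge h2.
Qed.

Lemma p_prime : prime p. Proof. exact (Cp_prime HCp). Qed.
Lemma p_gt1 : (1 < p)%N. Proof. exact: prime_gt1 p_prime. Qed.

Lemma natr_neq0 n : (n != 0)%N -> (n%:R : K) != 0.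
Proof.
move=> hn; have h : has_pchar0 K by exact (Cp_char0 HCp).
by move/pcharf0P : h => ->.
Qed.

Lemma ab_natr_gt0 n : (0 < n)%N -> 0 < abs (n%:R : K).
Proof.
move=> hn; rewrite lt_neqAle ab_ge0 andbT eq_sym.
apply/eqP => /ab_eq0 /eqP; apply/negP; apply: natr_neq0.
by rewrite -lt0n.
Qed.

Lemma ab_fact_gt0 n : 0 < abs ((n`!)%:R : K).
Proof. exact/ab_natr_gt0/fact_gt0. Qed.

Lemma ab_p : abs (p%:R) = (p%:R)^-1. Proof. exact (Cp_abs_p HCp). Qed.


Lemma cvg_le u l c e : cvgK abs u l ->
  (exists N, forall n, (N <= n)%N -> abs (u n - c) <= e) -> abs (l - c) <= e.
Proof.
move=> hu [N hN]; rewrite leNgt; apply/negP => hlt.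
have e0 : 0 <= e by apply: le_trans (hN N (leqnn N)); exact: ab_ge0.
have d0 : 0 < abs (l - c) by apply: le_lt_trans hlt.
have [N1 hN1] := hu _ d0.
pose n := maxn N N1.
have h1 : abs (l - u n) < abs (l - c) by rewrite abB; apply: hN1; exact: leq_maxr.
have h2 : abs (u n - c) < abs (l - c) by apply: le_lt_trans (hN n (leq_maxl _ _)) hlt.
by have := ab_tri_lt h1 h2; rewrite ltxx.
Qed.

Lemma limK_eq u l : cvgK abs u l -> limK abs u = l.
Proof.
move=> hu.
have hs : cvgK abs u (limK abs u).
  by rewrite /limK; apply: epsilon_spec; exists l.
apply/eqP; rewrite -subr_eq0; apply/eqP; apply: ab_small_eq0 => e e0.
have [N1 h1] := hs e e0; have [N2 h2] := hu e e0.
pose n := maxn N1 N2.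
apply: ltW; apply: (@ab_tri_lt _ (u n)).
  by rewrite abB; apply: h1; exact: leq_maxl.
by apply: h2; exact: leq_maxr.
Qed.

Lemma psum_diff (a : nat -> K) N n e : (N <= n)%N -> 0 <= e ->
  (forall k, (N <= k)%N -> abs (a k) <= e) ->
  abs (\sum_(k < n) a k - \sum_(k < N) a k) <= e.
Proof.
move=> hNn e0 h.
rewrite -!(big_mkord xpredT) (big_cat_nat (leq0n N) hNn) /= addrAC subrr add0r.
rewrite big_seq; apply: ab_sum_le => // k; rewrite mem_index_iota => /andP [hk _].
exact: h.
Qed.

Definition tends0 (a : nat -> K) :=
  forall e : R, 0 < e -> exists N, forall n, (N <= n)%N -> abs (a n) <= e.

Lemma series_cvg a : tends0 a ->
  cvgK abs (fun n => \sum_(k < n) a k) (seriesK abs a).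
Proof.
move=> ha.
have hc : cauchyK abs (fun n => \sum_(k < n) a k).
  move=> e e0; have e20 : 0 < e / 2 by rewrite divr_gt0 ?ltr0n.
  have [N hN] := ha _ e20; exists N => m n hm hn.
  have hm' := psum_diff hm (ltW e20) hN.
  have hn' := psum_diff hn (ltW e20) hN.
  have e2 : e / 2 < e by rewrite ltr_pdivrMr ?ltr0n // ltr_pMr // ltr1n.
  apply: le_lt_trans e2; apply: (@ab_tri_le _ (\sum_(k < N) a k)) => //.
  by rewrite abB.
have [l hl] := Cp_complete HCp hc.
by rewrite /seriesK (limK_eq hl).
Qed.

Lemma series_tail a N e : tends0 a -> 0 <= e ->
  (forall k, (N <= k)%N -> abs (a k) <= e) ->
  abs (seriesK abs a - \sum_(k < N) a k) <= e.
Proof.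
move=> ha e0 h; apply: cvg_le (series_cvg ha) _.
by exists N => n hn; apply: psum_diff.
Qed.

Lemma seriesK_fin a L : (forall k, (L <= k)%N -> a k = 0) ->
  seriesK abs a = \sum_(k < L) a k.
Proof.
move=> h; apply: limK_eq => e e0; exists L => n hn.
apply: le_lt_trans e0; apply: psum_diff => // k hk.
by rewrite h ?ab0.
Qed.


Definition rr (M : nat) : R := (p%:R)^-1 ^+ M.

Lemma pR_gt1 : 1 < (p%:R : R). Proof. by rewrite ltr1n p_gt1. Qed.
Lemma pR_gt0 : 0 < (p%:R : R). Proof. exact: lt_trans ltr01 pR_gt1. Qed.
Lemma pinv_ge0 : 0 <= (p%:R : R)^-1. Proof. by rewrite invr_ge0 ltW // pR_gt0. Qed.
Lemma pinv_le1 : (p%:R : R)^-1 <= 1.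
Proof. by rewrite invf_le1 ?pR_gt0 // ltW // pR_gt1. Qed.

Lemma rr_gt0 M : 0 < rr M. Proof. by rewrite exprn_gt0 // invr_gt0 pR_gt0. Qed.
Lemma rr_ge0 M : 0 <= rr M. Proof. exact: ltW (rr_gt0 M). Qed.
Lemma rr_le1 M : rr M <= 1. Proof. by rewrite exprn_ile1 ?pinv_ge0 ?pinv_le1. Qed.
Lemma rr0 : rr 0 = 1. Proof. by rewrite /rr expr0. Qed.
Lemma rrS M : rr M.+1 = rr M * (p%:R)^-1. Proof. by rewrite /rr exprSr. Qed.
Lemma rr_mono M N : (M <= N)%N -> rr N <= rr M.
Proof. by move=> h; apply: ler_wiXn2l => //; rewrite ?pinv_ge0 ?pinv_le1. Qed.

Lemma ab_pX M : abs ((p ^ M)%:R) = rr M.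
Proof. by rewrite natrX abX ab_p. Qed.

Lemma rr_small e : 0 < e -> exists M, rr M < e.
Proof.
move=> e0; pose n := Num.Def.archi_bound e^-1.
have h1 : e^-1 < n%:R by apply: archi_boundP; rewrite invr_ge0 ltW.
have h2 : (n < p ^ n)%N by apply: ltn_expl; exact: p_gt1.
have h3 : e^-1 < (p ^ n)%:R by apply: lt_trans h1 _; rewrite ltr_nat.
exists n; rewrite /rr exprVn -natrX -[e]invrK ltf_pV2 //.
  by rewrite posrE ltr0n expn_gt0 prime_gt0 // p_prime.
by rewrite posrE invr_gt0.
Qed.

Lemma isZp_int (n : int) : isZp abs (n%:~R).
Proof. by move=> e e0; exists n; rewrite subrr ab0. Qed.

Lemma isZp_nat (n : nat) : isZp abs (n%:R).
Proof. by move=> e e0; exists n; rewrite subrr ab0. Qed.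

Lemma isZpD x y : isZp abs x -> isZp abs y -> isZp abs (x + y).
Proof.
move=> hx hy e e0; have [n hn] := hx e e0; have [m hm] := hy e e0.
exists (n + m); rewrite intrD.
have -> : x + y - (n%:~R + m%:~R) = (x - n%:~R) + (y - m%:~R) by ring.
exact: abD_lt.
Qed.

Lemma isZpN x : isZp abs x -> isZp abs (- x).
Proof.
move=> hx e e0; have [n hn] := hx e e0.
by exists (- n); rewrite mulrNz -opprD abN.
Qed.

Lemma isZpB x y : isZp abs x -> isZp abs y -> isZp abs (x - y).
Proof. by move=> hx hy; apply: isZpD => //; apply: isZpN. Qed.

Lemma isZp_le1 x : isZp abs x -> abs x <= 1.
Proof.
move=> hx; have [n hn] := hx 1 ltr01.
have -> : x = (x - n%:~R) + n%:~R by ring.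
by apply: abD_le; [exact: ltW | exact: ab_intr].
Qed.

Lemma density x e : isZp abs x -> 0 < e -> exists N : nat, abs (x - N%:R) < e.
Proof.
move=> hx e0; have [M hM] := rr_small e0; have [n hn] := hx e e0.
case: n hn => m hm; first by exists m.
have hle : (m.+1 <= p ^ M * m.+1)%N by rewrite leq_pmull // expn_gt0 prime_gt0 // p_prime.
exists (p ^ M * m.+1 - m.+1)%N.
rewrite natrB // natrM.
have -> : x - ((p ^ M)%:R * m.+1%:R - m.+1%:R) =
   (x - (Negz m)%:~R) - (p ^ M)%:R * m.+1%:R by rewrite NegzE mulrNz; ring.
apply: abB_lt => //; rewrite abM ab_pX; apply: le_lt_trans hM.
by rewrite ler_piMr ?rr_ge0 ?ab_natr.
Qed.

Lemma abV x : x != 0 -> abs (x^-1) = (abs x)^-1.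
Proof.
move=> hx; have h : abs x * abs (x^-1) = 1 by rewrite -abM mulfV // ab1.
have hx0 : abs x != 0 by apply/eqP => /ab_eq0 /eqP; rewrite (negbTE hx).
by apply: (mulfI hx0); rewrite h mulfV.
Qed.

Definition PP (k : nat) (z : K) : K := \prod_(i < k) (z - i%:R).

Lemma PP_le1 k z : abs z <= 1 -> abs (PP k z) <= 1.
Proof.
move=> hz; rewrite /PP; apply: (big_ind (fun x => abs x <= 1)).
- by rewrite ab1.
- by move=> a b ha hb; rewrite abM mulr_ile1 ?ab_ge0.
- by move=> i _; apply: abB_le => //; exact: ab_natr.
Qed.

Lemma PP_diff k z w : abs z <= 1 -> abs w <= 1 ->
  abs (PP k z - PP k w) <= abs (z - w).
Proof.
move=> hz hw; elim: k => [|k IH]; first by rewrite /PP !big_ord0 subrr ab0 ab_ge0.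
rewrite /PP !big_ord_recr /= -/(PP k z) -/(PP k w).
have -> : PP k z * (z - k%:R) - PP k w * (w - k%:R) =
  (PP k z - PP k w) * (z - k%:R) + PP k w * (z - w) by ring.
apply: abD_le; rewrite abM.
  apply: le_trans IH; rewrite ler_piMr ?ab_ge0 //.
  by apply: abB_le => //; exact: ab_natr.
by rewrite ler_piMl ?ab_ge0 // PP_le1.
Qed.

Lemma PP_nat k N : PP k N%:R = ('C(N, k) * k`!)%:R.
Proof.
rewrite bin_ffact /PP; elim: k => [|k IH]; first by rewrite big_ord0 ffactn0.
rewrite big_ord_recr /= IH ffactnSr natrM.
case: (leqP k N) => hk; first by rewrite natrB.
by rewrite ffact_small // mulr0n !mul0r.
Qed.

Lemma fact_neq0 k : ((k`!)%:R : K) != 0.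
Proof. by apply: natr_neq0; rewrite -lt0n fact_gt0. Qed.

Lemma binomK_PP z k : binomK z k = PP k z / (k`!)%:R.
Proof. by []. Qed.

Lemma binomK_nat N k : binomK (N%:R : K) k = ('C(N, k))%:R.
Proof. by rewrite binomK_PP PP_nat natrM mulfK // fact_neq0. Qed.

Lemma PP_binomK z k : PP k z = (k`!)%:R * binomK z k.
Proof. by rewrite binomK_PP mulrC divfK // fact_neq0. Qed.

Lemma PP_bound k z : isZp abs z -> abs (PP k z) <= abs ((k`!)%:R : K).
Proof.
move=> hz; have [N hN] := density hz (ab_fact_gt0 k).
have -> : PP k z = (PP k z - PP k N%:R) + PP k N%:R by ring.
apply: abD_le.
  apply: le_trans (ltW hN); apply: PP_diff; first exact: isZp_le1.
  exact: ab_natr.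
by rewrite PP_nat natrM abM ler_piMl ?ab_ge0 ?ab_natr.
Qed.

Lemma binomK_le1 k z : isZp abs z -> abs (binomK z k) <= 1.
Proof.
move=> hz; rewrite binomK_PP abM abV ?fact_neq0 //.
rewrite -(divff (lt0r_neq0 (ab_fact_gt0 k))) ler_wpM2r //.
  by rewrite invr_ge0 ab_ge0.
exact: PP_bound.
Qed.


Lemma ab_unit u : coprime p u -> abs (u%:R : K) = 1.
Proof.
move=> hc; have [a _ ha] := Bezoutl u (prime_gt0 p_prime).
rewrite (eqP hc) in ha.
have hK : (1 : K) = p%:R * ((1 + a * u) %/ p)%:R - a%:R * u%:R.
  by rewrite -natrM mulnC divnK // natrD natrM; ring.
have hu := ab_natr u.
apply: le_anti; rewrite hu /=.
have hpc : abs (p%:R * ((1 + a * u) %/ p)%:R : K) < 1.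
  rewrite abM ab_p; apply: le_lt_trans (_ : (p%:R : R)^-1 < 1).
    by rewrite ler_piMr ?pinv_ge0 ?ab_natr.
  by rewrite invf_lt1 ?pR_gt0 ?pR_gt1.
rewrite leNgt; apply/negP => hlt.
have hau : abs (a%:R * u%:R : K) < 1.
  by rewrite abM; apply: le_lt_trans hlt; rewrite ler_piMl ?ab_ge0 ?ab_natr.
by have := abB_lt hpc hau; rewrite -hK ab1 ltxx.
Qed.

Lemma rr_ltS M : rr M.+1 < rr M.
Proof. by rewrite rrS gtr_pMr ?rr_gt0 // invf_lt1 ?pR_gt0 ?pR_gt1. Qed.

Lemma rr_lt M N : (M < N)%N -> rr N < rr M.
Proof. by move=> h; apply: le_lt_trans (rr_ltS M); apply: rr_mono. Qed.

Lemma ab_dvd m M : abs (m%:R : K) <= rr M -> (p ^ M %| m)%N.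
Proof.
case: (posnP m) => [->|hm]; first by rewrite dvdn0.
have [u hu hm'] := pfactor_coprime p_prime hm.
rewrite {1}hm' natrM abM ab_unit // mul1r ab_pX => hle.
rewrite hm' dvdn_mull // dvdn_exp2l //.
by rewrite leqNgt; apply/negP => /rr_lt; rewrite ltNge hle.
Qed.

Lemma fin_choice (Q : nat -> nat -> Prop) n :
  (forall i M M', Q i M -> (M <= M')%N -> Q i M') ->
  (forall i, (i < n)%N -> exists M, Q i M) -> exists M, forall i, (i < n)%N -> Q i M.
Proof.
move=> hmono; elim: n => [|n IH] h; first by exists 0%N.
have [M1 h1] : exists M, forall i, (i < n)%N -> Q i M.
  by apply: IH => i hi; apply: h; exact: ltnW.
have [M2 h2] := h n (ltnSn n).
exists (maxn M1 M2) => i; rewrite ltnS leq_eqVlt => /orP [/eqP ->|hi].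
  by apply: hmono h2 _; exact: leq_maxr.
by apply: hmono (h1 i hi) _; exact: leq_maxl.
Qed.

Lemma subclass z j M : isZp abs z -> abs (z - j%:R) <= rr M ->
  exists i, (i < p)%N /\ abs (z - (j + i * p ^ M)%:R) <= rr M.+1.
Proof.
move=> hz hzj.
have [N0 hN0] := density hz (rr_gt0 M.+1).
pose N := (N0 + p ^ M.+1 * j)%N.
have hN : abs (z - N%:R) <= rr M.+1.
  rewrite /N natrD natrM.
  have -> : z - (N0%:R + (p ^ M.+1)%:R * j%:R) = (z - N0%:R) - (p ^ M.+1)%:R * j%:R by ring.
  apply: abB_le; first exact: ltW.
  by rewrite abM ab_pX ler_piMr ?rr_ge0 ?ab_natr.
have hjN : (j <= N)%N.
  rewrite /N; apply: leq_trans (leq_addl _ _); apply: leq_pmull.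
  by rewrite expn_gt0 prime_gt0 // p_prime.
have hd : abs ((N - j)%:R : K) <= rr M.
  rewrite natrB // -abN opprB.
  have -> : j%:R - N%:R = (z - N%:R) - (z - j%:R) :> K by ring.
  by apply: abB_le => //; apply: le_trans hN _; apply: rr_mono.
have [t ht] := dvdnP (ab_dvd hd).
exists (t %% p)%N; split; first by rewrite ltn_mod prime_gt0 // p_prime.
have e1 : (N%:R : K) = j%:R + t%:R * (p ^ M)%:R.
  by rewrite -natrM -ht -natrD subnKC.
have e2 : (t%:R : K) = (t %/ p)%:R * p%:R + (t %% p)%:R.
  by rewrite -natrM -natrD -divn_eq.
have -> : z - (j + t %% p * p ^ M)%:R = (z - N%:R) + (t %/ p)%:R * (p ^ M.+1)%:R.
  rewrite natrD natrM e1 e2 expnS natrM; ring.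
apply: abD_le => //; rewrite abM ab_pX ler_piMl ?rr_ge0 ?ab_natr //.
Qed.

Section UC.
Variables (g : K -> K) (eps : R).
Hypothesis hg : contZp abs g.
Hypothesis heps : 0 < eps.

Definition bad M j := forall M', exists z w, [/\ isZp abs z, isZp abs w,
  abs (z - j%:R) <= rr M /\ abs (w - j%:R) <= rr M, abs (z - w) <= rr M' &
  eps <= abs (g z - g w)].

Lemma bad_step M j : bad M j -> exists i, (i < p)%N /\ bad M.+1 (j + i * p ^ M).
Proof.
move=> hb; apply: NNPP => hno.
pose Q i M' := ~ exists z w, [/\ isZp abs z, isZp abs w,
  abs (z - (j + i * p ^ M)%:R) <= rr M.+1 /\ abs (w - (j + i * p ^ M)%:R) <= rr M.+1,
  abs (z - w) <= rr M' & eps <= abs (g z - g w)].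
have hmono : forall i M1 M2, Q i M1 -> (M1 <= M2)%N -> Q i M2.
  move=> i M1 M2 hq h12 [z [w [h1 h2 h3 h5 h6]]]; apply: hq.
  exists z, w; split => //; apply: le_trans h5 _; exact: rr_mono.
have [M' hM'] : exists M', forall i, (i < p)%N -> Q i M'.
  apply: fin_choice => // i hi; apply: NNPP => hn; apply: hno.
  exists i; split => // M2; apply: NNPP => hn2; apply: hn; exists M2; exact: hn2.
have [z [w [hz hw [hzj hwj] hzw hge]]] := hb (maxn M' M.+1).
have [i [hi hzi]] := subclass hz hzj.
apply: (hM' i hi); exists z, w; split => //.
- split => //.
  have -> : w - (j + i * p ^ M)%:R = (w - z) + (z - (j + i * p ^ M)%:R) by ring.
  apply: abD_le => //; rewrite abB; apply: le_trans hzw _; apply: rr_mono.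
  exact: leq_maxr.
- by apply: le_trans hzw _; apply: rr_mono; exact: leq_maxl.
Qed.

Definition nxt M j : nat :=
  (j + epsilon (inhabits 0%N) (fun i => (i < p)%N /\ bad M.+1 (j + i * p ^ M)) * p ^ M)%N.

Lemma nxt_spec M j : bad M j ->
  bad M.+1 (nxt M j) /\ exists i, (i < p)%N /\ nxt M j = (j + i * p ^ M)%N.
Proof.
move=> hb; have := epsilon_spec (inhabits 0%N) _ (bad_step hb).
set i := epsilon _ _ => [[hi hbi]]; split => //; by exists i.
Qed.

Fixpoint sj (M : nat) : nat := if M is M'.+1 then nxt M' (sj M') else 0%N.

Lemma unif_cont : exists M, forall z w, isZp abs z -> isZp abs w ->
  abs (z - w) <= rr M -> abs (g z - g w) < eps.
Proof.
apply: NNPP => hno.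
have hb0 : bad 0 0.
  move=> M'; apply: NNPP => hn; apply: hno; exists M' => z w hz hw hzw.
  rewrite ltNge; apply/negP => hle; apply: hn; exists z, w; split => //.
  by rewrite !subr0 rr0; split; exact: isZp_le1.
have hball : forall M, bad M (sj M).
  by elim=> [|M IH] //=; case: (nxt_spec IH).
have hstep : forall M, abs ((sj M.+1)%:R - (sj M)%:R : K) <= rr M.
  move=> M /=; have [_ [i [hi ->]]] := nxt_spec (hball M).
  rewrite natrD addrAC subrr add0r natrM abM ab_pX ler_piMl ?rr_ge0 ?ab_natr //.
have hcs : forall n m, (n <= m)%N -> abs ((sj m)%:R - (sj n)%:R : K) <= rr n.
  move=> n; elim=> [|m IH]; first by rewrite leqn0 => /eqP ->; rewrite subrr ab0 rr_ge0.
  rewrite leq_eqVlt => /orP [/eqP ->|]; first by rewrite subrr ab0 rr_ge0.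
  rewrite ltnS => hnm.
  have -> : (sj m.+1)%:R - (sj n)%:R = ((sj m.+1)%:R - (sj m)%:R) + ((sj m)%:R - (sj n)%:R) :> K by ring.
  apply: abD_le; last exact: IH.
  by apply: le_trans (hstep m) _; apply: rr_mono.
have hcauchy : cauchyK abs (fun M => (sj M)%:R).
  move=> e e0; have [M hM] := rr_small e0; exists M => m n hm hn.
  apply: le_lt_trans hM.
  have -> : (sj m)%:R - (sj n)%:R = ((sj m)%:R - (sj M)%:R) - ((sj n)%:R - (sj M)%:R) :> K by ring.
  by apply: abB_le; apply: hcs.
have [x hx] := Cp_complete HCp hcauchy.
have hxZ : isZp abs x.
  move=> e e0; have [N hN] := hx e e0; exists (Posz (sj N)).
  by rewrite abB; apply: hN.
have hxM : forall M, abs (x - (sj M)%:R) <= rr M.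
  move=> M; apply: cvg_le hx _; exists M => n hn; exact: hcs.
have [d d0 hd] := hg hxZ heps.
have [M hM] := rr_small d0.
have [z [w [hz hw [hzj hwj] _ hge]]] := hball M 0%N.
have hzx : abs (g z - g x) < eps.
  apply: hd => //; apply: le_lt_trans hM.
  have -> : z - x = (z - (sj M)%:R) - (x - (sj M)%:R) by ring.
  by apply: abB_le.
have hwx : abs (g w - g x) < eps.
  apply: hd => //; apply: le_lt_trans hM.
  have -> : w - x = (w - (sj M)%:R) - (x - (sj M)%:R) by ring.
  by apply: abB_le.
have : abs (g z - g w) < eps.
  have -> : g z - g w = (g z - g x) - (g w - g x) by ring.
  exact: abB_lt.
by rewrite ltNge hge.
Qed.

End UC.


Definition bnd (g : K -> K) (B : R) := forall z, isZp abs z -> abs (g z) <= B.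
Definition ucm (g : K -> K) (e : R) M := forall z w, isZp abs z -> isZp abs w ->
  abs (z - w) <= rr M -> abs (g z - g w) <= e.

Lemma bounded g : contZp abs g -> exists B, 1 <= B /\ bnd g B.
Proof.
move=> hg; have [M hM] := unif_cont hg ltr01.
exists (Num.max 1 (\big[Num.max/0]_(j < p ^ M) abs (g j%:R))); split.
  by rewrite le_max lexx.
move=> z hz; have [N hN] := density hz (rr_gt0 M).
have hq : (0 < p ^ M)%N by rewrite expn_gt0 prime_gt0 // p_prime.
pose j := Ordinal (ltn_pmod N hq).
have hzj : abs (z - (j : nat)%:R) <= rr M.
  have -> : z - (N %% p ^ M)%:R = (z - N%:R) + (N %/ p ^ M)%:R * (p ^ M)%:R.
    by rewrite -natrM {2}(divn_eq N (p ^ M)) natrD; ring.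
  apply: abD_le; first exact: ltW.
  by rewrite abM ab_pX ler_piMl ?rr_ge0 ?ab_natr.
have h1 := hM _ _ hz (isZp_nat j) hzj.
have h2 : abs (g (j : nat)%:R) <= \big[Num.max/0]_(j < p ^ M) abs (g j%:R).
  by apply: (le_bigmax _ (fun j : 'I_(p ^ M) => abs (g (j : nat)%:R))).
have -> : g z = (g z - g (j : nat)%:R) + g (j : nat)%:R by ring.
apply: abD_le.
  by apply: le_trans (ltW h1) _; rewrite le_max lexx.
by apply: le_trans h2 _; rewrite le_max lexx orbT.
Qed.

Definition sgn n j : K := (-1) ^+ (n - j) * ('C(n, j))%:R.

Lemma sgn_rec n j : sgn n.+1 j.+1 = sgn n j - sgn n j.+1.
Proof.
rewrite /sgn subSS binS natrD mulrDr addrC; congr (_ + _).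
case: (ltnP j n) => hj.
  by rewrite -(subnSK hj) exprS mulN1r mulNr.
by rewrite bin_small ?ltnS // mulr0n !mulr0 oppr0.
Qed.

Lemma sum_shift (F : nat -> K) n :
  \sum_(i < n) F (bump 0 i) = \sum_(i < n) F i.+1.
Proof. by apply: eq_bigr => i _; rewrite /bump leq0n add1n. Qed.

Lemma nabla_formula g n z : iter n (@nablaK K) g z =
  \sum_(j < n.+1) sgn n j * g (z + j%:R).
Proof.
elim: n z => [|n IH] z.
  by rewrite big_ord_recl big_ord0 /sgn /= bin0 expr0 mulr1 mul1r addr0 addr0.
rewrite iterS /nablaK !IH.
rewrite [in RHS]big_ord_recl /=.
rewrite (sum_shift (fun k => sgn n.+1 k * g (z + k%:R))).
under [in RHS]eq_bigr => j _ do rewrite sgn_rec mulrBl.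
rewrite sumrB.
rewrite [\sum_(j < n.+1) sgn n j * g (z + j%:R)]big_ord_recl /=.
rewrite (sum_shift (fun k => sgn n k * g (z + k%:R))).
have e1 : forall i : nat, g (z + 1 + i%:R) = g (z + i.+1%:R).
  by move=> i; rewrite mulrSr addrA [z + 1 + _]addrAC.
under eq_bigr => i _ do rewrite e1.
rewrite [X in _ = _ + (_ - X)]big_ord_recr /=.
have e2 : sgn n n.+1 = 0 by rewrite /sgn bin_small // mulr0n mulr0.
have e0 : sgn n.+1 0 = - sgn n 0 by rewrite /sgn !subn0 !bin0 exprS; ring.
rewrite e2 e0 mul0r addr0.
set S1 := \sum_(i < n.+1) _; set S2 := \sum_(i < n) _.
ring.
Qed.

Lemma dvd_bin_pow M j : (0 < j)%N -> (j < p ^ M)%N -> (p %| 'C(p ^ M, j))%N.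
Proof.
move=> hj0 hjq; apply: NNPP => hn.
have hc : coprime (p ^ M) 'C(p ^ M, j).
  by apply: coprimeXl; rewrite prime_coprime ?p_prime //; apply/negP.
have : (p ^ M %| j * 'C(p ^ M, j))%N.
  by rewrite -(prednK hj0) -mul_bin_diag dvdn_mulr.
rewrite Gauss_dvdl // => /(dvdn_leq hj0).
by rewrite leqNgt hjq.
Qed.

Lemma ab_sign_sum M : abs (1 + (-1) ^+ (p ^ M) : K) <= (p%:R)^-1.
Proof.
rewrite -signr_odd; case ho: (odd (p ^ M)).
  by rewrite expr1 subrr ab0 pinv_ge0.
rewrite expr0.
have hM : (0 < M)%N by case: M ho => //.
have h2 : (2 %| p ^ M)%N by rewrite dvdn2 ho.
have : (2 %| p)%N by move: h2; rewrite Euclid_dvdX // => /andP [].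
rewrite dvdn_prime2 // ?p_prime // => /eqP hp.
by rewrite -ab_p -hp.
Qed.

Lemma nabla_q_bound g B e M : 0 <= e -> 0 <= B -> bnd g B -> ucm g e M ->
  bnd (iter (p ^ M) (@nablaK K) g) (Num.max e (B * (p%:R)^-1)).
Proof.
move=> e0 B0 hb hu z hz; rewrite nabla_formula.
have hq : (0 < p ^ M)%N by rewrite expn_gt0 prime_gt0 // p_prime.
move: (hq); rewrite -(prednK hq); set q' := (p ^ M).-1 => _.
rewrite big_ord_recr big_ord_recl /=.
have hZ : forall j, isZp abs (z + j%:R) by move=> j; apply: isZpD => //; exact: isZp_nat.
set mid := \sum_(i < q') _.
have hmid : abs mid <= B * (p%:R)^-1.
  apply: ab_sum_le; first by rewrite mulr_ge0 ?pinv_ge0.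
  move=> i _; rewrite /sgn abM abM abX abN1 expr1n mul1r mulrC.
  apply: ler_pM; rewrite ?ab_ge0 //; first exact: hb.
  have hi : (p %| 'C(q'.+1, bump 0 i))%N.
    rewrite /q' prednK //; apply: dvd_bin_pow => //.
    by rewrite /bump leq0n add1n; have := ltn_ord i; rewrite /q' ltn_predRL.
  move: hi => /dvdnP [c ->]; rewrite natrM abM ab_p.
  by rewrite ler_piMl ?pinv_ge0 ?ab_natr.
have -> : sgn q'.+1 0 * g (z + 0%:R) + mid + sgn q'.+1 q'.+1 * g (z + q'.+1%:R) =
   (g (z + q'.+1%:R) - g z) + ((1 + (-1) ^+ q'.+1) * g z) + mid.
  rewrite /sgn subn0 subnn bin0 binn expr0 mulr1 mul1r addr0; ring.
apply: abD_le; last by apply: le_trans hmid _; rewrite le_max lexx orbT.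
apply: abD_le.
  apply: le_trans (_ : e <= _); last by rewrite le_max lexx.
  apply: hu => //.
  by rewrite addrC addKr /q' prednK // ab_pX.
apply: le_trans (_ : B * (p%:R)^-1 <= _); last by rewrite le_max lexx orbT.
rewrite abM mulrC; apply: ler_pM; rewrite ?ab_ge0 //; first exact: hb.
by rewrite /q' prednK // ab_sign_sum.
Qed.


Lemma isZp1 : isZp abs 1. Proof. by have := isZp_nat 1; rewrite mulr1n. Qed.
Lemma isZp0 : isZp abs 0. Proof. by have := isZp_nat 0; rewrite mulr0n. Qed.

Lemma nabla_bnd g B : bnd g B -> bnd (@nablaK K g) B.
Proof.
move=> h z hz; rewrite /nablaK; apply: abB_le; apply: h => //.
by apply: isZpD => //; exact: isZp1.
Qed.

Lemma nabla_ucm g e M : ucm g e M -> ucm (@nablaK K g) e M.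
Proof.
move=> h z w hz hw hzw; rewrite /nablaK.
have -> : g (z + 1) - g z - (g (w + 1) - g w) = (g (z + 1) - g (w + 1)) - (g z - g w) by ring.
apply: abB_le; apply: h => //; try by apply: isZpD => //; exact: isZp1.
by have -> : z + 1 - (w + 1) = z - w by ring.
Qed.

Lemma iter_bnd n g B : bnd g B -> bnd (iter n (@nablaK K) g) B.
Proof. by move=> h; elim: n => [|n IH] //=; apply: nabla_bnd. Qed.

Lemma iter_ucm n g e M : ucm g e M -> ucm (iter n (@nablaK K) g) e M.
Proof. by move=> h; elim: n => [|n IH] //=; apply: nabla_ucm. Qed.

Lemma bnd_le g B B' : B <= B' -> bnd g B -> bnd g B'.
Proof. by move=> hB h z hz; apply: le_trans (h z hz) hB. Qed.

Lemma iter_kq g (B e : R) M k : 0 <= e -> 0 <= B -> bnd g B -> ucm g e M ->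
  bnd (iter (k * p ^ M) (@nablaK K) g) (Num.max e (B * rr k)).
Proof.
move=> e0 B0 hb hu; elim: k => [|k IH].
  by rewrite mul0n /=; apply: bnd_le hb; rewrite rr0 mulr1 le_max lexx orbT.
rewrite mulSn iterD.
have hB' : 0 <= Num.max e (B * rr k) by rewrite le_max e0.
apply: bnd_le (nabla_q_bound e0 hB' IH (iter_ucm _ hu)).
have hfin : Num.max e (B * rr k) * (p%:R)^-1 <= Num.max e (B * rr k.+1).
  have [h|h] := lerP e (B * rr k).
    by rewrite rrS mulrA le_max lexx orbT.
  rewrite le_max; apply/orP; left.
  by rewrite ler_piMr ?pinv_le1.
by rewrite ge_max le_max lexx /= hfin.
Qed.

Lemma mahler_decay g : contZp abs g ->
  exists B, [/\ 1 <= B, (forall n, abs (mahler g n) <= B) & tends0 (mahler g)].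
Proof.
move=> hg; have [B [B1 hB]] := bounded hg.
have B0 : 0 < B by apply: lt_le_trans ltr01 B1.
exists B; split => //.
  by move=> n; exact: (iter_bnd n hB isZp0).
move=> e e0; have [M hM] := unif_cont hg e0.
have hu : ucm g e M by move=> z w hz hw hzw; apply: ltW; apply: hM.
have [k hk] := rr_small (divr_gt0 e0 B0).
exists (k * p ^ M)%N => n hn.
rewrite /mahler -(subnK hn) iterD.
have hb2 := iter_bnd (n - k * p ^ M) (iter_kq k (ltW e0) (ltW B0) hB hu).
apply: le_trans (hb2 0 isZp0) _.
rewrite ge_max lexx /= mulrC -ler_pdivlMr //.
exact: ltW.
Qed.


Lemma newton (g : K -> K) N : g N%:R = \sum_(m < N.+1) ('C(N, m))%:R * mahler g m.
Proof.
elim: N g => [|N IH] g.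
  by rewrite big_ord_recl big_ord0 addr0 bin0 mul1r /mahler /= mulr0n.
have -> : g N.+1%:R = g N%:R + nablaK g N%:R by rewrite /nablaK mulrSr; ring.
rewrite (IH g) (IH (nablaK g)).
have hm : forall m, mahler (nablaK g) m = mahler g m.+1.
  by move=> m; rewrite /mahler iterSr.
have -> : \sum_(m < N.+1) ('C(N, m))%:R * mahler (nablaK g) m =
   \sum_(m < N.+1) ('C(N, m))%:R * mahler g m.+1 by apply: eq_bigr => m _; rewrite hm.
rewrite [in RHS]big_ord_recl /= (sum_shift (fun k => ('C(N.+1, k))%:R * mahler g k)).
under [in RHS]eq_bigr => m _ do rewrite binS natrD mulrDl.
rewrite big_split /= [in LHS]big_ord_recl /= (sum_shift (fun k => ('C(N, k))%:R * mahler g k)).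
rewrite [\sum_(i < N.+1) ('C(N, i.+1))%:R * _]big_ord_recr /= (bin_small (ltnSn N)) mul0r addr0.
rewrite !bin0; ring.
Qed.

Definition FF (e : nat -> K) L (z : K) := \sum_(i < L) e i * binomK z i.

Lemma pascalK (z : K) k : binomK (z + 1) k.+1 = binomK z k.+1 + binomK z k.
Proof.
rewrite !binomK_PP.
have h1 : PP k.+1 (z + 1) = (z + 1) * PP k z.
  rewrite /PP big_ord_recl /= mulr0n subr0; congr (_ * _).
  by apply: eq_bigr => i _; rewrite /bump leq0n add1n mulrSr; ring.
have h2 : PP k.+1 z = PP k z * (z - k%:R) by rewrite /PP big_ord_recr.
rewrite h1 h2 factS natrM.
have hk : (k.+1%:R : K) != 0 by apply: natr_neq0.
rewrite -natr1 in hk.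
have hf := fact_neq0 k.
by field; rewrite hf addrC hk.
Qed.

Lemma binomK_0 (w : K) : binomK w 0 = 1.
Proof. by rewrite binomK_PP /PP big_ord0 /= mulr1n divr1. Qed.

Lemma nabla_FF e L : nablaK (FF e L.+1) = FF (fun i => e i.+1) L.
Proof.
apply: functional_extensionality => z; rewrite /nablaK /FF -sumrB big_ord_recl /=.
rewrite !binomK_0 subrr add0r.
rewrite (sum_shift (fun i => e i * binomK (z + 1) i - e i * binomK z i)).
by apply: eq_bigr => i _; rewrite pascalK; ring.
Qed.

Lemma iter_FF m e L : iter m (@nablaK K) (FF e (L + m)) = FF (fun i => e (i + m)%N) L.
Proof.
elim: m e => [|m IH] e.
  have -> : (fun i => e (i + 0)%N) = e by apply: functional_extensionality => i; rewrite addn0.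
  by rewrite addn0.
rewrite iterSr addnS nabla_FF IH.
have -> : (fun i => e (i + m).+1) = (fun i => e (i + m.+1)%N).
  by apply: functional_extensionality => i; rewrite addnS.
by [].
Qed.

Lemma binomK0 i : binomK (0 : K) i = (i == 0)%:R.
Proof. by rewrite -(mulr0n 1) binomK_nat bin0n. Qed.

Lemma mahler_FF e L m : (m < L)%N -> mahler (FF e L) m = e m.
Proof.
move=> hm; rewrite /mahler -(subnK hm) addnS -addSn iter_FF /FF big_ord_recl /=.
rewrite binomK0 mulr1 add0n big1 ?addr0 // => i _.
by rewrite binomK0 /bump leq0n add1n /= mulr0.
Qed.

Lemma mahler_ext (g h : K -> K) L : (forall j, (j <= L)%N -> g j%:R = h j%:R) ->
  forall n j, (j + n <= L)%N -> iter n (@nablaK K) g j%:R = iter n (@nablaK K) h j%:R.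
Proof.
move=> hgh; elim=> [|n IH] j hj; first by rewrite /=; apply: hgh; rewrite addn0 in hj.
rewrite !iterS /nablaK -mulrSr !IH //; first by apply: leq_trans hj; rewrite leq_add2l.
by rewrite addSn -addnS.
Qed.

Lemma bin_mul_id k m N : ('C(k + m, k) * 'C(N, k + m) = 'C(N, k) * 'C(N - k, m))%N.
Proof.
case: (leqP (k + m) N) => hkm.
  have hk : (k <= N)%N by apply: leq_trans hkm; exact: leq_addr.
  have hm : (m <= N - k)%N by rewrite leq_subRL.
  have h1 := bin_fact (leq_addr m k); rewrite addKn in h1.
  have h2 := bin_fact hkm.
  have h3 := bin_fact hk.
  have h4 := bin_fact hm.
  have hX : (0 < k`! * m`! * (N - k - m)`!)%N by rewrite !muln_gt0 !fact_gt0.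
  apply/eqP; rewrite -(eqn_pmul2r hX); apply/eqP.
  transitivity N`!.
    rewrite -h2 -h1 subnDA; ring.
  by rewrite -h3 -h4; ring.
rewrite (bin_small hkm) muln0.
case: (leqP k N) => hk.
  by rewrite (bin_small (n := N - k)) ?muln0 // ltn_subLR.
by rewrite bin_small.
Qed.

Lemma tri_sum (F : nat -> nat -> K) N :
  \sum_(n < N.+1) \sum_(k < n.+1) F k (n - k)%N =
  \sum_(k < N.+1) \sum_(m < (N - k).+1) F k m.
Proof.
elim: N => [|N IH]; first by rewrite !big_ord_recl !big_ord0.
rewrite big_ord_recr /= IH [in RHS]big_ord_recr /= subnn.
under [in RHS]eq_bigr => i _ do rewrite (subSn (ltn_ord i : (i <= N)%N)) big_ord_recr /=.
rewrite big_split /= -addrA; congr (_ + _).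
rewrite [in LHS]big_ord_recr /= subnn; congr (_ + _).
  by apply: eq_bigr => i _; rewrite subSn // -ltnS.
by rewrite big_ord_recl big_ord0 addr0.
Qed.


Lemma fact_mono k j : (k <= j)%N -> abs ((j`!)%:R : K) <= abs ((k`!)%:R : K).
Proof.
move=> hkj; rewrite -(subnK hkj); elim: (j - k)%N => [|n IH] //.
rewrite addSn factS natrM abM; apply: le_trans IH.
by rewrite ler_piMl ?ab_ge0 ?ab_natr.
Qed.

Lemma fact_mp m : abs (((m * p)`!)%:R : K) <= rr m.
Proof.
elim: m => [|m IH]; first by rewrite mul0n rr0 /= ab1.
have hpos : (0 < m.+1 * p)%N by rewrite muln_gt0 /= prime_gt0 // p_prime.
rewrite -(prednK hpos) factS natrM abM (prednK hpos) rrS mulrC.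
apply: ler_pM; rewrite ?ab_ge0 //.
  apply: le_trans IH; apply: fact_mono.
  have hp := prime_gt0 p_prime.
  rewrite -ltnS (prednK hpos) mulSn; lia.
rewrite natrM abM ab_p mulrC ler_piMr ?pinv_ge0 ?ab_natr //.
Qed.

Lemma fact_small e : 0 < e -> exists N, forall k, (N <= k)%N -> abs ((k`!)%:R : K) <= e.
Proof.
move=> e0; have [m hm] := rr_small e0; exists (m * p)%N => k hk.
apply: le_trans (fact_mono hk) _; apply: le_trans (fact_mp m) _; exact: ltW.
Qed.

Section Main.
Variables (phi : K -> K) (y : K).
Hypothesis Hphi : contZp abs phi.
Hypothesis Hy : isZp abs y.

Definition dd k : K := (-1) ^+ k * (k`!)%:R * binomK y k.
Definition psi := one_minus_x_pow abs y.
Definition cc n := conv_coef psi phi n.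
Definition Lterm z k := (-1) ^+ k * (k`!)%:R * binomK y k * binomK z k * phi (z - k%:R).
Definition Rterm z n := cc n * binomK z n.

Lemma ab_sgn k : abs ((-1) ^+ k : K) = 1.
Proof. by rewrite abX abN1 expr1n. Qed.

Lemma ab_dd k : abs (dd k) <= abs ((k`!)%:R : K).
Proof.
rewrite /dd (abM ((-1) ^+ k * _)) (abM ((-1) ^+ k)) ab_sgn mul1r.
by rewrite ler_piMr ?ab_ge0 //; exact: (binomK_le1 k Hy).
Qed.

Lemma ab_dd1 k : abs (dd k) <= 1.
Proof. by apply: le_trans (ab_dd k) _; exact: ab_natr. Qed.

Lemma psi_nat j L : (j < L)%N -> psi j%:R = FF dd L j%:R.
Proof.
move=> hjL; rewrite /psi /one_minus_x_pow /Sop (seriesK_fin (L := L)).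
  by apply: eq_bigr => i _; rewrite mulr1.
move=> k hk; rewrite binomK_nat bin_small; last exact: leq_trans hjL hk.
by rewrite mulr0n mulr0 mul0r.
Qed.

Lemma mahler_psi k : mahler psi k = dd k.
Proof.
rewrite -(mahler_FF dd (ltnSn k)) /mahler.
have := @mahler_ext psi (FF dd k.+1) k _ k 0%N (leqnn _).
rewrite mulr0n; apply => j hj; apply: psi_nat; by rewrite ltnS.
Qed.


Lemma mul3_le (a b c a' b' c' : R) : 0 <= a -> 0 <= b -> 0 <= c ->
  a <= a' -> b <= b' -> c <= c' -> a * b * c <= a' * b' * c'.
Proof.
move=> ha hb hc h1 h2 h3; apply: ler_pM; rewrite ?mulr_ge0 //.
exact: ler_pM.
Qed.

Lemma cc_expand n : cc n = \sum_(k < n.+1) ('C(n, k))%:R * dd k * mahler phi (n - k).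
Proof. by apply: eq_bigr => k _; rewrite mahler_psi. Qed.

Lemma cc_bound B : (forall n, abs (mahler phi n) <= B) -> forall n, abs (cc n) <= B.
Proof.
move=> hB n; rewrite cc_expand; apply: ab_sum_le.
  by apply: le_trans (hB 0%N); exact: ab_ge0.
move=> k _; rewrite abM abM.
have -> : B = 1 * 1 * B by rewrite !mul1r.
by apply: mul3_le; rewrite ?ab_ge0 ?ab_natr ?ab_dd1.
Qed.

Lemma cc_tends0 : tends0 cc.
Proof.
move=> e e0; have [B [B1 hB ht]] := mahler_decay Hphi.
have B0 : 0 < B by apply: lt_le_trans ltr01 B1.
have [K1 hK1] := fact_small (divr_gt0 e0 B0).
have [K2 hK2] := ht e e0.
exists (K1 + K2)%N => n hn; rewrite cc_expand; apply: ab_sum_le => [|k _]; first exact: ltW.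
rewrite abM abM.
case: (leqP K1 k) => hk.
  have -> : e = 1 * (e / B) * B by rewrite mul1r divfK // lt0r_neq0.
  apply: mul3_le; rewrite ?ab_ge0 ?ab_natr //.
  by apply: le_trans (ab_dd k) _; apply: hK1.
have -> : e = 1 * 1 * e by rewrite !mul1r.
apply: mul3_le; rewrite ?ab_ge0 ?ab_natr ?ab_dd1 //.
apply: hK2; have hkn : (k < n)%N by apply: leq_trans hn; apply: leq_trans (leq_addr _ _).
lia.
Qed.

Lemma Lterm_PP z k : Lterm z k = ((-1) ^+ k * binomK y k) * (PP k z * phi (z - k%:R)).
Proof. by rewrite /Lterm PP_binomK; ring. Qed.

Lemma Lterm_bound B z k : bnd phi B -> isZp abs z ->
  abs (Lterm z k) <= abs ((k`!)%:R : K) * B.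
Proof.
move=> hB hz; rewrite Lterm_PP abM (abM ((-1) ^+ k)) ab_sgn mul1r (abM (PP k z)).
rewrite PP_binomK (abM (k`!%:R)).
rewrite mulrA.
have hfin : 1 * (abs ((k`!)%:R : K) * 1) * B = abs ((k`!)%:R : K) * B by rewrite mul1r mulr1.
rewrite -hfin.
apply: mul3_le.
- exact: ab_ge0.
- by rewrite mulr_ge0 ?ab_ge0.
- exact: ab_ge0.
- exact: binomK_le1.
- by rewrite ler_wpM2l ?ab_ge0 ?binomK_le1.
by apply: hB; apply: isZpB => //; exact: isZp_nat.
Qed.

Lemma Lterm_tends0 z : isZp abs z -> tends0 (Lterm z).
Proof.
move=> hz e e0; have [B [B1 hB]] := bounded Hphi.
have B0 : 0 < B by apply: lt_le_trans ltr01 B1.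
have [K1 hK1] := fact_small (divr_gt0 e0 B0).
exists K1 => k hk; apply: le_trans (Lterm_bound k hB hz) _.
by rewrite -ler_pdivlMr //; apply: hK1.
Qed.

Lemma Rterm_tends0 z : isZp abs z -> tends0 (Rterm z).
Proof.
move=> hz e e0; have [K0 hK] := cc_tends0 e0; exists K0 => n hn.
rewrite /Rterm abM; apply: le_trans (hK n hn); rewrite ler_piMr ?ab_ge0 //.
exact: binomK_le1.
Qed.

Lemma int_identity N : seriesK abs (Lterm N%:R) = seriesK abs (Rterm N%:R).
Proof.
rewrite (seriesK_fin (L := N.+1)); last first.
  by move=> k hk; rewrite /Lterm binomK_nat bin_small // mulr0n mulr0 mul0r.
rewrite (seriesK_fin (L := N.+1) (a := Rterm N%:R)); last first.
  by move=> k hk; rewrite /Rterm binomK_nat bin_small // mulr0n mulr0.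
pose F k m := ('C(k + m, k))%:R * dd k * mahler phi m * ('C(N, k + m))%:R.
have hR : \sum_(n < N.+1) Rterm N%:R n = \sum_(n < N.+1) \sum_(k < n.+1) F k (n - k)%N.
  apply: eq_bigr => n _; rewrite /Rterm cc_expand mulr_suml binomK_nat.
  apply: eq_bigr => k _; have hk : (k <= n)%N by rewrite -ltnS.
  by rewrite /F subnKC.
rewrite hR tri_sum; apply: eq_bigr => k _.
have hk : (k <= N)%N by rewrite -ltnS.
rewrite /Lterm binomK_nat -natrB // (newton phi (N - k)) mulr_sumr.
apply: eq_bigr => m _; rewrite /F.
have e1 := bin_mul_id k m N.
have : (('C(k + m, k))%:R * ('C(N, k + m))%:R : K) = ('C(N, k))%:R * ('C(N - k, m))%:R.
  by rewrite -!natrM e1.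
rewrite /dd => e2.
have -> : ('C(k + m, k))%:R * ((-1) ^+ k * (k`!)%:R * binomK y k) * mahler phi m * ('C(N, k + m))%:R
  = (('C(k + m, k))%:R * ('C(N, k + m))%:R) * ((-1) ^+ k * (k`!)%:R * binomK y k) * mahler phi m by ring.
rewrite e2; ring.
Qed.


Lemma binomK_diff n x z : isZp abs x -> isZp abs z ->
  abs (binomK x n - binomK z n) <= abs (x - z) / abs ((n`!)%:R : K).
Proof.
move=> hx hz; rewrite !binomK_PP -mulrBl abM abV ?fact_neq0 //.
rewrite ler_wpM2r ?invr_ge0 ?ab_ge0 //.
by apply: PP_diff; apply: isZp_le1.
Qed.

Lemma main x : isZp abs x -> seriesK abs (Lterm x) = seriesK abs (Rterm x).
Proof.
move=> hx; apply/eqP; rewrite -subr_eq0; apply/eqP; apply: ab_small_eq0 => e e0.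
have [B1 [B11 hB1]] := bounded Hphi.
have [B2 [B21 hB2 _]] := mahler_decay Hphi.
have B1p : 0 < B1 by apply: lt_le_trans ltr01 B11.
have B2p : 0 < B2 by apply: lt_le_trans ltr01 B21.
have [K1 hK1] := fact_small (divr_gt0 e0 B1p).
have [K2 hK2] := cc_tends0 e0.
pose K0 := maxn K1 K2.
have [M hM] := unif_cont Hphi e0.
have hK0f := ab_fact_gt0 K0.
pose d := Num.min (rr M) (Num.min (e / B1) (e * abs ((K0`!)%:R : K) / B2)).
have d0 : 0 < d.
  by rewrite /d !lt_min rr_gt0 !divr_gt0 ?mulr_gt0.
have [N hN] := density hx d0.
move: hN; rewrite /d !lt_min => /andP [hNM /andP [hN1 hN2]].
have hNZ : isZp abs N%:R := isZp_nat N.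
have tailL : forall z, isZp abs z ->
    abs (seriesK abs (Lterm z) - \sum_(k < K0) Lterm z k) <= e.
  move=> z hz; apply: series_tail (Lterm_tends0 hz) (ltW e0) _ => k hk.
  apply: le_trans (Lterm_bound k hB1 hz) _.
  rewrite -ler_pdivlMr //; apply: hK1; apply: leq_trans hk; exact: leq_maxl.
have tailR : forall z, isZp abs z ->
    abs (seriesK abs (Rterm z) - \sum_(k < K0) Rterm z k) <= e.
  move=> z hz; apply: series_tail (Rterm_tends0 hz) (ltW e0) _ => n hn.
  rewrite /Rterm abM; apply: le_trans (_ : abs (cc n) <= e).
    by rewrite ler_piMr ?ab_ge0 ?binomK_le1.
  apply: hK2; apply: leq_trans hn; exact: leq_maxr.
have finL : abs (\sum_(k < K0) Lterm x k - \sum_(k < K0) Lterm N%:R k) <= e.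
  rewrite -sumrB; apply: ab_sum_le => [|k _]; first exact: ltW.
  rewrite !Lterm_PP -mulrBr abM (abM ((-1) ^+ k)) ab_sgn mul1r.
  rewrite -[e]mul1r; apply: ler_pM; rewrite ?ab_ge0 ?binomK_le1 //.
  have -> : PP k x * phi (x - k%:R) - PP k N%:R * phi (N%:R - k%:R) =
     (PP k x - PP k N%:R) * phi (x - k%:R) + PP k N%:R * (phi (x - k%:R) - phi (N%:R - k%:R)) by ring.
  have hxk : isZp abs (x - k%:R) by apply: isZpB => //; exact: isZp_nat.
  have hNk : isZp abs (N%:R - k%:R) by apply: isZpB => //; exact: isZp_nat.
  apply: abD_le.
    rewrite abM; apply: le_trans (_ : (e / B1) * B1 <= e); last by rewrite divfK ?lt0r_neq0.
    apply: ler_pM; rewrite ?ab_ge0 //; last exact: hB1.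
    apply: le_trans (ltW hN1).
    by apply: PP_diff; [exact: isZp_le1 | exact: isZp_le1].
  rewrite abM -[e]mul1r; apply: ler_pM; rewrite ?ab_ge0 //.
    by apply: PP_le1; exact: isZp_le1.
  apply: ltW; apply: hM => //.
  have -> : x - k%:R - (N%:R - k%:R) = x - N%:R by ring.
  exact: ltW.
have finR : abs (\sum_(k < K0) Rterm x k - \sum_(k < K0) Rterm N%:R k) <= e.
  rewrite -sumrB; apply: ab_sum_le => [|n _]; first exact: ltW.
  rewrite /Rterm -mulrBr abM.
  have hnf := ab_fact_gt0 n.
  have hn : abs (binomK x n - binomK N%:R n) <= e / B2.
    apply: le_trans (binomK_diff n hx hNZ) _.
    rewrite ler_pdivrMr //.
    apply: le_trans (ltW hN2) _.
    rewrite mulrAC; apply: ler_wpM2l; first by rewrite divr_ge0 // ltW.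
    apply: fact_mono.
    by apply: ltnW; exact: ltn_ord.
  apply: le_trans (_ : B2 * (e / B2) <= e); last by rewrite mulrC divfK ?lt0r_neq0.
  by apply: ler_pM; rewrite ?ab_ge0 //; apply: cc_bound.
have hI := int_identity N.
set Lx := seriesK abs (Lterm x); set Rx := seriesK abs (Rterm x).
set LN := seriesK abs (Lterm N%:R) in hI *; set RN := seriesK abs (Rterm N%:R) in hI *.
set PLx := \sum_(k < K0) Lterm x k; set PLN := \sum_(k < K0) Lterm N%:R k.
set PRx := \sum_(k < K0) Rterm x k; set PRN := \sum_(k < K0) Rterm N%:R k.
have -> : Lx - Rx = (Lx - PLx) + (PLx - PLN) - (LN - PLN) + (RN - PRN)
   - (PRx - PRN) - (Rx - PRx) by rewrite hI; ring.
apply: abB_le; last exact: (tailR x hx).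
apply: abB_le; last exact: finR.
apply: abD_le; last exact: (tailR _ hNZ).
apply: abB_le; last exact: (tailL _ hNZ).
apply: abD_le; last exact: finL.
exact: (tailL x hx).
Qed.

End Main.
End P.

Theorem proposition6p7 (R : realType) (K : closedFieldType) (abs : K -> R) (p : nat)
  (HCp : is_Cp abs p)
  (phi : K -> K) (Hphi : contZp abs phi) (y : K) (Hy : isZp abs y) :
  forall x : K, isZp abs x ->
    Sop abs y phi x = convK abs (one_minus_x_pow abs y) phi x.
Proof.
move=> x hx; exact: (main HCp Hphi Hy hx).
Qed.
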